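(* Let $n\ge 1$ and for $R>0$ let $P_n(R)$ be the set of monic degree-$n$ polynomials with integer coefficients having a real root $\lambda>1$ with all other roots strictly smaller than $\lambda$ in absolute value, and all of whose roots have absolute value at most $R$. Then $$\lim_{R\to\infty}\frac{|\{p\in P_n(R): p \text{ is reducible over }\mathbb{Z}\}|}{|P_n(R)|}=0.$$
   Context: $|A|$ denotes the cardinality of a finite set $A$. *)

(* Defs.v *)
From HB Require Import structures.
From mathcomp Require Import all_boot all_order all_algebra.
From mathcomp Require Import all_classical all_reals all_analysis.
From mathcomp Require Import complex.
Set Implicit Arguments. Unset Strict Implicit. Unset Printing Implicit Defensive.
Import Order.TTheory GRing.Theory Num.Theory.
Import numFieldNormedType.Exports.
Local Open Scope classical_set_scope.
Local Open Scope complex_scope.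
Local Open Scope ring_scope.

Definition polyC_of (R : realType) (p : {poly int}) : {poly R[i]} :=
  map_poly (fun z : int => z%:~R) p.

(* p has a real root lam > 1 such that all the other roots (i.e. the roots
   of p / (X - lam), counted with multiplicity) are strictly smaller than
   lam in absolute value. *)
Definition dominant_real_root (R : realType) (p : {poly int}) : Prop :=
  exists lam : R, 1 < lam /\ root (polyC_of R p) lam%:C /\
    forall z : R[i], root (polyC_of R p %/ ('X - (lam%:C)%:P)) z ->
      `|z| < lam%:C.

Definition roots_bounded (R : realType) (r : R) (p : {poly int}) : Prop :=
  forall z : R[i], root (polyC_of R p) z -> `|z| <= r%:C.

Definition Pn (R : realType) (n : nat) (r : R) : set {poly int} :=
  [set p | p \is monic /\ size p = n.+1 /\ dominant_real_root R p
           /\ roots_bounded r p].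

Definition reducible_Z (p : {poly int}) : Prop :=
  exists g h : {poly int}, p = g * h /\
    ~~ (g \is a GRing.unit) /\ ~~ (h \is a GRing.unit).

(* Main.v *)
Set Warnings "-all".
Require Import Defs.
From HB Require Import structures.
From mathcomp Require Import all_boot all_order all_algebra.
From mathcomp Require Import all_classical all_reals all_analysis.
From mathcomp Require Import complex finmap.
From mathcomp Require Import ring lra zify.
Import Order.TTheory GRing.Theory Num.Theory.
Import numFieldNormedType.Exports.
Local Open Scope classical_set_scope.
Local Open Scope ring_scope.

Section B.
Variable R : realType.
Local Open Scope complex_scope.

Lemma horner_monic (S : comNzRingType) (P : {poly S}) k x : size P = k.+1 -> P \is monic ->
  P.[x] = \sum_(j < k) P`_j * x ^+ j + x ^+ k.
Proof.
move=> hs hm; rewrite horner_coef hs big_ord_recr /=.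
have -> : P`_k = 1 by move/monicP: hm; rewrite /lead_coef hs.
by rewrite mul1r.
Qed.

Lemma sum_bound (c : nat -> R) (k e : nat) (m y K B : R) :
  0 <= m -> m <= 2 * y -> 0 < K -> 0 <= B -> (k <= e)%N ->
  (forall j, (j < k)%N -> `|c j| * K <= B * m ^+ (e - j)) ->
  \sum_(j < k) `|c j| * y ^+ j <= k%:R * (B * 2 ^+ e * y ^+ e / K).
Proof.
move=> m0 my K0 B0 ke hc.
have y0 : 0 <= y by lra.
rewrite mulr_natl -[X in _ *+ X]card_ord -sumr_const.
apply: ler_sum => j _.
have hj := hc j (ltn_ord j).
have h1 : `|c j| <= B * m ^+ (e - j) / K.
  by rewrite ler_pdivlMr.
have h2 : m ^+ (e - j) <= (2 * y) ^+ (e - j).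
  by apply: lerXn2r; rewrite // nnegrE; lra.
have h3 : (2 * y) ^+ (e - j) * y ^+ j = 2 ^+ (e - j) * y ^+ e.
  by rewrite exprMn -mulrA -exprD subnK // ltnW // (leq_trans (ltn_ord j)).
have h4 : (2:R) ^+ (e - j) <= 2 ^+ e by apply: ler_weXn2l => //; [lra | apply: leq_subr].
apply: (le_trans (ler_wpM2r (exprn_ge0 _ y0) h1)).
rewrite mulrAC ler_pM2r ?invr_gt0 // -!mulrA; apply: ler_wpM2l => //.
apply: (le_trans (ler_wpM2r (exprn_ge0 _ y0) h2)); rewrite h3.
by apply: ler_wpM2r => //; apply: exprn_ge0.
Qed.

Lemma tail_le (P : {poly R}) (k : nat) (m y K : R) :
  0 < m -> m <= 2 * y -> 0 < K -> 2 * (k%:R * 2 ^+ k.+1) <= K ->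
  (forall j, (j < k)%N -> `|P`_j| * K <= m ^+ (k.+1 - j)) ->
  `|\sum_(j < k) P`_j * y ^+ j| <= y ^+ k.+1 / 2.
Proof.
move=> m0 my K0 hK hc.
have y0 : 0 <= y by lra.
apply: (le_trans (ler_norm_sum _ _ _)).
have -> : \sum_(j < k) `|P`_j * y ^+ j| = \sum_(j < k) `|P`_j| * y ^+ j.
  by apply: eq_bigr => j _; rewrite normrM normrX (ger0_norm y0).
have := @sum_bound (fun j => P`_j) k k.+1 m y K 1 (ltW m0) my K0 ler01 (leqnSn k).
move=> /(_ _) h; apply: (le_trans (h _)); first by move=> j hj; rewrite mul1r; apply: hc.
have Y0 : 0 <= y ^+ k.+1 by apply: exprn_ge0.
set a := k%:R * 2 ^+ k.+1 in hK *.
have -> : k%:R * (1 * 2 ^+ k.+1 * y ^+ k.+1 / K) = a * y ^+ k.+1 / K.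
  by rewrite /a mul1r !mulrA.
rewrite ler_pdivrMr //; nra.
Qed.


Lemma dom_root (P : {poly R}) (k : nat) (m A K : R) :
  size P = k.+2 -> P \is monic -> P`_k = - A ->
  0 < m -> m <= A -> 0 < K -> 2 * (k%:R * 2 ^+ k.+1) <= K ->
  (forall j, (j < k)%N -> `|P`_j| * K <= m ^+ (k.+1 - j)) ->
  exists2 l, A / 2 <= l <= 2 * A & root P l.
Proof.
move=> hs hm hk m0 mA K0 hK hc.
have hP y : P.[y] = \sum_(j < k) P`_j * y ^+ j + (- A) * y ^+ k + y * y ^+ k.
  by rewrite (@horner_monic _ P k.+1 y hs hm) big_ord_recr /= hk exprS.
apply: poly_ivt; first lra.
apply/andP; split.
- rewrite hP.
  have := @tail_le P k m (A / 2) K m0 ltac:(lra) K0 hK hc.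
  rewrite exprS.
  set T := \sum_(j < k) _; set Z := (A / 2) ^+ k => hT.
  have Z0 : 0 <= Z by apply: exprn_ge0; lra.
  have := ler_norm T; nra.
- rewrite hP.
  have := @tail_le P k m (2 * A) K m0 ltac:(lra) K0 hK hc.
  rewrite exprS.
  set T := \sum_(j < k) _; set Z := (2 * A) ^+ k => hT.
  have Z0 : 0 <= Z by apply: exprn_ge0; lra.
  have : - T <= `|T| by rewrite -normrN ler_norm.
  nra.
Qed.


Lemma coef_mulXsubC (S : comNzRingType) (q : {poly S}) c i :
  (q * ('X - c%:P))`_i = (if i == 0%N then 0 else q`_i.-1) - c * q`_i.
Proof. by rewrite mulrBr coefB coefMX coefMC mulrC. Qed.

Lemma aux_half (m l X Y : R) : 0 < m -> m / 2 <= l -> 0 <= X -> l * X <= m * Y -> X <= 2 * Y.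
Proof. move=> *; nra. Qed.

Lemma q_bound (P q : {poly R}) (k : nat) (m l K : R) :
  P = q * ('X - l%:P) -> 0 < m -> m / 2 <= l -> 0 < K ->
  (forall j, (j < k)%N -> `|P`_j| * K <= m ^+ (k.+1 - j)) ->
  forall j, (j < k)%N -> `|q`_j| * K <= 4 ^+ j.+1 * m ^+ (k - j).
Proof.
move=> hP m0 ml K0 hc.
have l0 : 0 < l by lra.
elim=> [|j IH] hj.
- have := hc 0%N hj; rewrite hP coef_mulXsubC /= sub0r normrN normrM (gtr0_norm l0) subn0.
  move=> h.
  have h2 : l * (`|q`_0| * K) <= m * m ^+ k by rewrite -exprS mulrA.
  have := @aux_half m l _ _ m0 ml (mulr_ge0 (normr_ge0 _) (ltW K0)) h2.
  have : 0 <= m ^+ k by apply: exprn_ge0; lra.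
  rewrite expr1 subn0; lra.
- have hj' : (j < k)%N by apply: ltnW.
  have := IH hj'; have := hc j.+1 hj.
  rewrite hP coef_mulXsubC /=.
  set a := q`_j; set b := q`_j.+1 => h1 h2.
  have e1 : b * l = a - (a - l * b) by ring.
  have hkj : (k - j = (k - j.+1).+1)%N by rewrite subnSK.
  have hkj' : (k.+1 - j.+1 = (k - j.+1).+1)%N by rewrite subSS.
  rewrite hkj' in h1; rewrite hkj in h2.
  set M := m ^+ (k - j.+1) in h1 h2 *.
  have M0 : 0 <= M by apply: exprn_ge0; lra.
  have h3 : l * (`|b| * K) <= m * ((4 ^+ j.+1 + 1) * M).
    have -> : l * (`|b| * K) = `|a - (a - l * b)| * K by rewrite -e1 normrM (gtr0_norm l0); ring.
    apply: (le_trans (ler_wpM2r (ltW K0) (ler_normB _ _))).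
    rewrite mulrDl; rewrite exprS in h1 h2.
    have e2 : m * ((4 ^+ j.+1 + 1) * M) = 4 ^+ j.+1 * (m * M) + m * M by ring.
    rewrite e2; apply: lerD => //.
  have := @aux_half m l _ _ m0 ml (mulr_ge0 (normr_ge0 _) (ltW K0)) h3.
  have : (2:R) * (4 ^+ j.+1 + 1) <= 4 ^+ j.+2.
    rewrite (exprS _ j.+1).
    have : (1:R) <= 4 ^+ j.+1 by apply: exprn_ege1; lra.
    lra.
  move=> h4 h5. apply: (le_trans h5). rewrite mulrA. by apply: ler_wpM2r.
Qed.


Lemma normC_real (c : R) : `|c%:C| = `|c|%:C.
Proof. by rewrite normc_def /= expr0n /= addr0 sqrtr_sqr. Qed.

Lemma normC_def (z : R[i]) : exists2 t : R, 0 <= t & `|z| = t%:C.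
Proof. by exists (Num.sqrt (complex.Re z ^+ 2 + complex.Im z ^+ 2)); [apply: sqrtr_ge0 | rewrite normc_def]. Qed.

Lemma q_roots (q : {poly R}) (k : nat) (m K : R) :
  size q = k.+1 -> q \is monic -> 0 < m -> 0 < K -> k%:R * (4 ^+ k * 2 ^+ k) < K ->
  (forall j, (j < k)%N -> `|q`_j| * K <= 4 ^+ j.+1 * m ^+ (k - j)) ->
  forall z : R[i], root (map_poly (real_complex R) q) z -> `|z| < (m / 2)%:C.
Proof.
move=> hs hm m0 K0 hK hc z hz.
have [t t0 ht] := normC_def z.
rewrite ht ltcR; case: ltP => // tm; exfalso.
set Q := map_poly (real_complex R) q.
have hQs : size Q = k.+1 by rewrite size_map_poly.
have hQm : Q \is monic by rewrite map_monic.
move: hz; rewrite /root (@horner_monic _ Q k z hQs hQm) addrC addr_eq0 => /eqP hz.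
have h1 : `|z| ^+ k <= \sum_(j < k) (`|q`_j| * t ^+ j)%:C.
  rewrite -normrX hz normrN; apply: (le_trans (ler_norm_sum _ _ _)).
  apply: ler_sum => j _; rewrite normrM normrX coef_map /= normC_real ht.
  by rewrite rmorphM rmorphXn.
move: h1; rewrite -rmorph_sum ht -rmorphXn lecR => h1.
have mt : m <= 2 * t by lra.
have B0 : (0:R) <= 4 ^+ k by apply: exprn_ge0; lra.
have := @sum_bound (fun j => q`_j) k k m t K (4 ^+ k) (ltW m0) mt K0 B0 (leqnn k).
move=> /(_ _) h2.
have {h2} h2 : \sum_(j < k) `|q`_j| * t ^+ j <= k%:R * (4 ^+ k * 2 ^+ k * t ^+ k / K).
  apply: h2 => j hj; apply: (le_trans (hc j hj)); apply: ler_wpM2r.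
    by apply: exprn_ge0; lra.
  by apply: ler_weXn2l => //; lra.
have t0' : 0 < t by lra.
have T0 : 0 < t ^+ k by apply: exprn_gt0.
move: h1 h2 hK; set T := t ^+ k; set c := k%:R * (4 ^+ k * 2 ^+ k); set S := \sum_(j < k) _.
have -> : k%:R * (4 ^+ k * 2 ^+ k * T / K) = c * T / K by rewrite /c !mulrA.
move=> h1 h2 hK.
have : c * T / K < T by rewrite ltr_pdivrMr // [T * K]mulrC ltr_pM2r.
lra.
Qed.


Definition pR (p : {poly int}) : {poly R} := map_poly (fun z : int => z%:~R) p.
Lemma pR_monic p : p \is monic -> pR p \is monic.
Proof. by move=> hm; apply: monic_map. Qed.
Lemma pR_size p : size (pR p) = size p.
Proof. by apply: size_map_inj_poly => //; apply: intr_inj. Qed.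
Lemma pR_coef p j : (pR p)`_j = (p`_j)%:~R.
Proof. by rewrite coef_map. Qed.
Lemma polyC_ofE p : polyC_of R p = map_poly (real_complex R) (pR p).
Proof. rewrite /polyC_of /pR -map_poly_comp; apply: eq_map_poly => z /=. by rewrite rmorph_int. Qed.
End B.

Definition Kn (k : nat) : nat := (2 * (k.+1 * 8 ^ k.+1)).+1.

Lemma Kn_ge1 k : (2 * (k * 2 ^ k.+1) <= Kn k)%N.
Proof.
have h1 : (2 ^ k.+1 <= 8 ^ k.+1)%N by rewrite leq_exp2r.
have h2 : (k * 2 ^ k.+1 <= k.+1 * 8 ^ k.+1)%N by apply: leq_mul.
rewrite /Kn; lia.
Qed.

Lemma Kn_ge2 k : (k * (4 ^ k * 2 ^ k) < Kn k)%N.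
Proof.
have -> : (4 ^ k * 2 ^ k = 8 ^ k)%N by rewrite -expnMn.
have h1 : (8 ^ k <= 8 ^ k.+1)%N by rewrite leq_exp2l.
have h2 : (k * 8 ^ k <= k.+1 * 8 ^ k.+1)%N by apply: leq_mul.
rewrite /Kn; lia.
Qed.

Section C.
Variable R : realType.
Local Open Scope complex_scope.

Lemma main_B (p : {poly int}) (k m : nat) (r : R) :
  p \is monic -> size p = k.+2 ->
  m%:R <= - (pR R p)`_k -> - (pR R p)`_k < 2 * m%:R ->
  (3 <= m)%N -> 4 * m%:R <= r ->
  (forall j, (j < k)%N -> `|(pR R p)`_j| * (Kn k)%:R <= m%:R ^+ (k.+1 - j)) ->
  Pn k.+1 r p.
Proof.
move=> hm hs hA1 hA2 hm3 hr hc.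
set P := pR R p in hA1 hA2 hc *; set A := - P`_k in hA1 hA2.
have m0 : (0:R) < m%:R by rewrite ltr0n; lia.
have K0 : (0:R) < (Kn k)%:R by rewrite ltr0n.
have hK1 : 2 * (k%:R * 2 ^+ k.+1) <= (Kn k)%:R :> R.
  by have := Kn_ge1 k; rewrite -(ler_nat R) !natrM natrX.
have hK2 : k%:R * (4 ^+ k * 2 ^+ k) < (Kn k)%:R :> R.
  by have := Kn_ge2 k; rewrite -(ltr_nat R) !natrM !natrX.
have hPs : size P = k.+2 by rewrite pR_size.
have hPm : P \is monic by apply: pR_monic.
have hPk : P`_k = - A by rewrite opprK.
have [l hl hroot] := @dom_root R P k m%:R A (Kn k)%:R hPs hPm hPk m0 hA1 K0 hK1 hc.
move/factor_theorem: (hroot) => [q hq].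
have hq0 : q != 0.
  apply/eqP => q0; move: hPs; rewrite hq q0 mul0r size_poly0 //.
have hqs : size q = k.+1.
  move: hPs; rewrite hq size_Mmonic ?monicXsubC // size_XsubC addn2 /= => -[] h; exact: h.
have hqm : q \is monic.
  by rewrite monicE -(lead_coef_Mmonic q (monicXsubC l)) -hq; apply: hPm.
case/andP: hl => hl1 hl2.
have m3 : (3:R) <= m%:R by rewrite ler_nat.
have ml : m%:R / 2 <= l by lra.
have hqb := @q_bound R P q k m%:R l (Kn k)%:R hq m0 ml K0 hc.
have hqr := @q_roots R q k m%:R (Kn k)%:R hqs hqm m0 K0 hK2 hqb.
have hpC : polyC_of R p = map_poly (real_complex R) q * ('X - (l%:C)%:P).
  by rewrite polyC_ofE -/P hq rmorphM /= map_polyXsubC.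
rewrite /Pn /=; split; first by []; split; first by []; split.
- exists l; split; first by lra.
  split.
    by rewrite polyC_ofE /root -/P horner_map (rootP hroot).
  move=> z; rewrite hpC mulpK ?polyXsubC_eq0 // => /hqr hz.
  by apply: (lt_le_trans hz); rewrite lecR.
- move=> z; rewrite hpC rootM => /orP [/hqr hz | ].
    by apply: ltW; apply: (lt_le_trans hz); rewrite lecR; lra.
  rewrite root_XsubC => /eqP ->; rewrite normC_real lecR ger0_norm; lra.
Qed.

End C.

Lemma int_unit (a b : int) : a * b = 1 -> a = 1 \/ a = -1.
Proof.
move=> h; have := congr1 absz h; rewrite abszM /= => /eqP; rewrite muln_eq1 => /andP [/eqP ha _].
case: a {h} ha => [[|[|n]]|[|n]] //= _; by [left|right].
Qed.

Lemma monic_nonunit_size (g : {poly int}) : g \is monic -> ~~ (g \is a GRing.unit) -> (2 <= size g)%N.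
Proof.
move=> hm hu; rewrite ltnNge; apply/negP => hs.
move: hu; rewrite (size1_polyC hs).
have : g`_0 = 1.
  move/monicP: (hm); rewrite /lead_coef.
  have : size g = 1%N by have := monic_neq0 hm; rewrite -size_poly_gt0; lia.
  by move=> ->.
by move=> ->; rewrite unitr1.
Qed.

Section A.
Variable R : realType.
Local Open Scope complex_scope.

Lemma comb_bound (a b c : R[i]) (X r Y : R) :
  `|a| <= X%:C -> `|b| <= r%:C -> `|c| <= Y%:C -> `|a - b * c| <= (X + r * Y)%:C.
Proof.
move=> ha hb hc; apply: (le_trans (ler_normB _ _)); rewrite normrM rmorphD rmorphM /=.
by apply: lerD => //; apply: ler_pM.
Qed.

Lemma prod_coef_bound (rs : seq R[i]) (r : R) : 0 <= r -> (forall z, z \in rs -> `|z| <= r%:C) ->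
  forall j, (j <= size rs)%N ->
  `|(\prod_(z <- rs) ('X - z%:P))`_j| <= (2 ^+ size rs * r ^+ (size rs - j))%:C.
Proof.
move=> r0; elim: rs => [|z rs IH] hz j hj.
  move: hj; rewrite leqn0 => /eqP ->; rewrite big_nil coef1 /= normr1 expr0 mulr1 lecR; lra.
have IH' := IH (fun w hw => hz w (mem_behead (s := z :: rs) hw)).
have hzr : `|z| <= r%:C by apply: hz; rewrite in_cons eqxx.
rewrite big_cons mulrBl coefB coefXM coefCM /=.
set Q := \prod_(_ <- rs) _; set k := size rs.
have hQs : size Q = k.+1 by rewrite size_prod_XsubC.
have P2 : (0:R) <= 2 ^+ k by apply: exprn_ge0; lra.
case: j hj => [|j] hj.
  rewrite /= sub0r normrN normrM subn0 .
  have := IH' 0%N (leq0n _); rewrite subn0 => h.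
  apply: (le_trans (ler_pM (normr_ge0 _) (normr_ge0 _) hzr h)).
  rewrite -rmorphM lecR /= -/k !exprS. have : 0 <= 2 ^+ k * r ^+ k by apply: mulr_ge0 => //; apply: exprn_ge0. nra.
rewrite /= subSS.
have hj' : (j <= k)%N by [].
have h1 := IH' j hj'.
case: (ltnP j k) => hjk.
  have h2 := IH' j.+1 hjk.
  apply: (le_trans (@comb_bound _ _ _ _ _ _ h1 hzr h2)); rewrite lecR.
  have -> : (k - j = (k - j.+1).+1)%N by rewrite subnSK.
  rewrite !exprS. have : 0 <= r ^+ (k - j.+1) by apply: exprn_ge0. nra.
have hjk' : j = k by apply/eqP; rewrite eqn_leq hj' hjk.
subst j.
have h2 : `|Q`_k.+1| <= 0%:C by rewrite nth_default ?hQs // normr0.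
apply: (le_trans (@comb_bound _ _ _ _ _ _ h1 hzr h2)); rewrite lecR subnn !expr0 !mulr1 mulr0 addr0 exprS; lra.
Qed.


Lemma int_coef_bound (p : {poly int}) (k : nat) (r : R) : 0 <= r -> p \is monic ->
  size p = k.+1 -> roots_bounded r p ->
  forall j, (j <= k)%N -> (absz p`_j)%:R <= 2 ^+ k * r ^+ (k - j) :> R.
Proof.
move=> r0 hm hs hb j hj.
set PC := polyC_of R p.
have PCm : PC \is monic by rewrite /PC polyC_ofE; apply: monic_map; apply: pR_monic.
have PCs : size PC = k.+1 by rewrite /PC polyC_ofE size_map_poly pR_size.
have [rs hrs] := closed_field_poly_normal PC.
rewrite (monicP PCm) scale1r in hrs.
have hsz : size rs = k.
  by move: PCs; rewrite hrs size_prod_XsubC => -[].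
have hz : forall z, z \in rs -> `|z| <= r%:C.
  by move=> z hz; apply: hb; rewrite -/PC hrs root_prod_XsubC.
have := @prod_coef_bound rs r r0 hz; rewrite hsz => /(_ j hj).
rewrite -hrs /PC polyC_ofE coef_map /= pR_coef normC_real lecR.
by rewrite natr_absz intr_norm.
Qed.


Lemma roots_bounded_l (g h : {poly int}) (r : R) : roots_bounded r (g * h) -> roots_bounded r g.
Proof.
move=> hb z hz; apply: hb; rewrite /polyC_of rmorphM /= rootM.
by move: hz; rewrite /polyC_of => ->.
Qed.

Lemma red_decomp_monic (p g h : {poly int}) n (r : R) : p \is monic -> size p = n.+1 ->
  roots_bounded r p -> p = g * h -> g \is monic ->
  ~~ (g \is a GRing.unit) -> ~~ (h \is a GRing.unit) ->
  exists k, [/\ (0 < k < n)%N, h \is monic, size g = k.+1, size h = (n - k).+1 &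
     roots_bounded r g /\ roots_bounded r h].
Proof.
move=> hm hs hb hp hgm hgu hhu.
have hhm : h \is monic.
  by rewrite monicE -(lead_coef_monicM h hgm) -hp; apply: hm.
have sg := @monic_nonunit_size g hgm hgu.
have sh := @monic_nonunit_size h hhm hhu.
have hsz : size p = (size g + size h).-1.
  by rewrite hp size_mul ?monic_neq0.
exists (size g).-1; split.
- apply/andP; split; lia.
- by [].
- lia.
- lia.
- split; first by apply: (@roots_bounded_l g h r); rewrite -hp.
  by apply: (@roots_bounded_l h g r); rewrite mulrC -hp.
Qed.

Lemma red_decomp (p : {poly int}) n (r : R) : Pn n r p -> reducible_Z p ->
  exists k g h, [/\ (0 < k < n)%N, p = g * h, g \is monic, h \is monic &
    [/\ size g = k.+1, size h = (n - k).+1, roots_bounded r g & roots_bounded r h]].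
Proof.
move=> [hm [hs [_ hb]]] [g [h [hp [hgu hhu]]]].
have : lead_coef g * lead_coef h = 1 by rewrite -lead_coefM -hp; apply/monicP.
move/int_unit => [] hl.
- have hgm : g \is monic by apply/monicP.
  have [k [hk hhm sg sh [bg bh]]] := @red_decomp_monic p g h n r hm hs hb hp hgm hgu hhu.
  by exists k, g, h.
- have hgm : - g \is monic by rewrite monicE lead_coefN hl opprK.
  have hp' : p = (- g) * (- h) by rewrite mulrNN.
  have hgu' : ~~ (- g \is a GRing.unit) by rewrite unitrN.
  have hhu' : ~~ (- h \is a GRing.unit) by rewrite unitrN.
  have [k [hk hhm sg sh [bg bh]]] := @red_decomp_monic p (- g) (- h) n r hm hs hb hp' hgm hgu' hhu'.
  by exists k, (- g), (- h).
Qed.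

End A.

Lemma card_le_seq (T : choiceType) (A : set T) (s : seq T) :
  (forall x, A x -> x \in s) -> (#|` fset_set A| <= size s)%N.
Proof.
move=> hA.
have fA : finite_set A by apply: (sub_finite_set _ (finite_seq s)) => x /hA.
apply: uniq_leq_size; first exact: fset_uniq.
by move=> x; rewrite in_fset_set // in_setE => /hA.
Qed.

Lemma card_ge_seq (T : choiceType) (A : set T) (s : seq T) :
  finite_set A -> uniq s -> (forall x, x \in s -> A x) -> (size s <= #|` fset_set A|)%N.
Proof.
move=> fA us hs; apply: uniq_leq_size => // x /hs hx.
by rewrite in_fset_set // in_setE.
Qed.

Definition inI (iv : int * nat) (x : int) := (iv.1 <= x) && (x < iv.1 + iv.2%:Z).

Fixpoint sbox (ivs : seq (int * nat)) : seq (seq int) :=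
  if ivs is iv :: ivs' then
    [seq x :: s | x <- [seq iv.1 + (i%:Z) | i <- iota 0 iv.2], s <- sbox ivs']
  else [:: [::]].

Lemma size_sbox ivs : size (sbox ivs) = \prod_(iv <- ivs) iv.2.
Proof.
elim: ivs => [|iv ivs IH] /=; first by rewrite big_nil.
by rewrite size_allpairs size_map size_iota IH big_cons.
Qed.

Lemma uniq_sbox ivs : uniq (sbox ivs).
Proof.
elim: ivs => [|iv ivs IH] //=.
apply: allpairs_uniq => //.
  rewrite map_inj_uniq ?iota_uniq // => i j /= /addrI; by case.
by move=> [x s] [y t] _ _ /= [-> ->].
Qed.

Lemma mem_sbox ivs s : s \in sbox ivs <->
  (size s = size ivs /\ forall j, (j < size ivs)%N -> inI (nth (0, 0%N) ivs j) (nth 0 s j)).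
Proof.
elim: ivs s => [|iv ivs IH] s /=.
  split; first by rewrite inE => /eqP ->.
  by case=> hs _; case: s hs.
split.
- move/allpairsP => [[x t] [/= hx ht ->]].
  move/IH: ht => [hts htj]; split; first by rewrite /= hts.
  case=> [|j] hj /=; last by apply: htj.
  move/mapP: hx => [i hi ->]; move: hi; rewrite mem_iota add0n => hi.
  by rewrite /inI lerDl ltrD2l ltz_nat hi.
- case: s => [|x t] [] //= [hts] hj.
  apply: (allpairs_f (fun x s => x :: s)); last first.
    by apply/IH; split=> // j hj'; apply: (hj j.+1).
  have := hj 0%N isT; rewrite /inI /= => /andP [h1 h2].
  apply/mapP; exists (absz (x - iv.1)).
    rewrite mem_iota add0n /=; rewrite -ltz_nat gez0_abs ?subr_ge0 //.
    by rewrite ltrBlDl.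
  by rewrite gez0_abs ?subr_ge0 // addrCA subrr addr0.
Qed.

Definition pbox ivs : seq {poly int} := [seq Poly (rcons s 1) | s <- sbox ivs].

Lemma polyseq_box (s : seq int) : Poly (rcons s 1) = rcons s 1 :> seq int.
Proof. by apply: (@PolyK _ 0); rewrite last_rcons oner_eq0. Qed.

Lemma size_pbox ivs : size (pbox ivs) = \prod_(iv <- ivs) iv.2.
Proof. by rewrite size_map size_sbox. Qed.

Lemma uniq_pbox ivs : uniq (pbox ivs).
Proof.
rewrite map_inj_in_uniq ?uniq_sbox // => s t _ _ h.
have := congr1 (fun q : {poly int} => polyseq q) h; rewrite /= !polyseq_box.
by move/rcons_inj => -[].
Qed.

Lemma pbox_mem ivs p : p \in pbox ivs -> [/\ p \is monic, size p = (size ivs).+1 &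
  forall j, (j < size ivs)%N -> inI (nth (0, 0%N) ivs j) p`_j].
Proof.
move/mapP => [s /mem_sbox [hs hj] ->].
have hps := polyseq_box s.
split.
- by rewrite monicE /lead_coef hps size_rcons nth_rcons ltnn eqxx.
- by rewrite hps size_rcons hs.
- by move=> j hj'; rewrite hps nth_rcons hs hj' hj.
Qed.

Lemma mem_pbox ivs p : p \is monic -> size p = (size ivs).+1 ->
  (forall j, (j < size ivs)%N -> inI (nth (0, 0%N) ivs j) p`_j) -> p \in pbox ivs.
Proof.
move=> hm hs hj; set k := size ivs in hs hj.
have e : polyseq p = rcons (take k p) 1.
  have hl : nth 0 p k = 1 by move/monicP: hm; rewrite /lead_coef hs.
  by rewrite -hl -take_nth ?hs // take_oversize ?hs.
apply/mapP; exists (take k p); last by rewrite -e polyseqK.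
apply/mem_sbox; split; first by rewrite size_takel // hs.
by move=> j hj'; rewrite nth_take //; apply: hj.
Qed.

Local Open Scope nat_scope.

Definition E (k : nat) : nat := \sum_(j < k) (k - j).

Lemma E_S k : E k.+1 = k.+1 + E k.
Proof.
by rewrite /E big_ord_recl subn0.
Qed.

Lemma E_Sr k : E k.+1 = \sum_(j < k) (k.+1 - j) + 1.
Proof. by rewrite /E big_ord_recr /= subSnn. Qed.

Lemma E_add a b : E (a + b) = E a + E b + a * b.
Proof.
elim: b => [|b IH]; first by rewrite addn0 /E big_ord0 muln0 !addn0.
by rewrite addnS !E_S IH mulnS; lia.
Qed.

Lemma iota_ord (F : nat -> nat) k : \prod_(j <- iota 0 k) F j = \prod_(j < k) F j.
Proof. by rewrite -(big_mkord xpredT) /index_iota subn0. Qed.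

Lemma iota_sum (F : nat -> nat) k : \sum_(j <- iota 0 k) F j = \sum_(j < k) F j.
Proof. by rewrite -(big_mkord xpredT) /index_iota subn0. Qed.

Lemma prod_expn (I : Type) (r : seq I) (N : nat) (f : I -> nat) :
  \prod_(i <- r) N ^ (f i) = N ^ (\sum_(i <- r) f i).
Proof.
elim: r => [|x r IH]; first by rewrite !big_nil.
by rewrite !big_cons IH expnD.
Qed.

Definition symI (b : nat) : int * nat := ((- (b%:Z))%R, (2 * b).+1).

Lemma inI_sym (x : int) (b : nat) : (absz x <= b)%N -> inI (symI b) x.
Proof. by move=> h; rewrite /inI /=; apply/andP; split; lia. Qed.

Lemma inI_sym_abs (x : int) (b : nat) : inI (symI b) x -> (absz x <= b)%N.
Proof. by rewrite /inI /= => /andP [h1 h2]; lia. Qed.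

Definition ivsU (k N : nat) := [seq symI (2 ^ k * N ^ (k - j)) | j <- iota 0 k].

Lemma size_ivsU k N : size (ivsU k N) = k.
Proof. by rewrite size_map size_iota. Qed.

Lemma nth_ivsU k N j : (j < k)%N -> nth (0%R, 0%N) (ivsU k N) j = symI (2 ^ k * N ^ (k - j)).
Proof. by move=> hj; rewrite (nth_map 0%N) ?size_iota // nth_iota. Qed.

Lemma size_pboxU k N : (0 < N)%N -> (size (pbox (ivsU k N)) <= (3 * 2 ^ k) ^ k * N ^ (E k))%N.
Proof.
move=> N0; rewrite size_pbox big_map iota_ord.
apply: (@leq_trans (\prod_(j < k) ((3 * 2 ^ k) * N ^ (k - j)))).
  apply: leq_prod => j _ /=.
  have : (1 <= N ^ (k - j))%N by rewrite expn_gt0 N0.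
  have : (1 <= 2 ^ k)%N by rewrite expn_gt0.
  nia.
rewrite big_split /= prod_nat_const card_ord.
by rewrite -(iota_ord (fun j => N ^ (k - j))) prod_expn iota_sum.
Qed.

Definition loI (m : nat) : int * nat := ((- (2 * m)%:Z + 1)%R, m).

Definition ivsL (k m : nat) :=
  rcons [seq symI (m ^ (k.+1 - j) %/ Kn k) | j <- iota 0 k] (loI m).

Lemma size_ivsL k m : size (ivsL k m) = k.+1.
Proof. by rewrite size_rcons size_map size_iota. Qed.

Lemma nth_ivsL k m j : nth (0%R, 0%N) (ivsL k m) j =
  if (j < k)%N then symI (m ^ (k.+1 - j) %/ Kn k) else if j == k then loI m else (0%R, 0%N).
Proof.
rewrite nth_rcons size_map size_iota.
by case: ltnP => hj //; rewrite (nth_map 0%N) ?size_iota // nth_iota.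
Qed.

Lemma size_pboxL k m : m ^ E k.+1 <= Kn k ^ k * size (pbox (ivsL k m)).
Proof.
rewrite size_pbox big_rcons /= big_map iota_ord E_Sr expnD expn1 mulnA.
apply: leq_mul => //.
rewrite -(iota_sum (fun j => k.+1 - j)) -prod_expn iota_ord.
have -> : Kn k ^ k = \prod_(j < k) Kn k by rewrite prod_nat_const card_ord.
rewrite -big_split /=.
apply: leq_prod => j _.
have Kp : 0 < Kn k by [].
have := ltn_ceil (m ^ (k.+1 - j)) Kp.
set b := m ^ (k.+1 - j) %/ Kn k.
move=> h; apply: (leq_trans (ltnW h)); rewrite mulnC leq_mul2l; apply/orP; right.
lia.
Qed.

Local Open Scope ring_scope.

Section F.
Variable R : realType.

Lemma pboxL_Pn (k m : nat) (r : R) p : (3 <= m)%N -> 4 * m%:R <= r ->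
  p \in pbox (ivsL k m) -> Pn k.+1 r p.
Proof.
move=> hm3 hr /pbox_mem [hm hs hj]; rewrite size_ivsL in hs hj.
have hk := hj k (ltnSn k); rewrite nth_ivsL ltnn eqxx /inI /= in hk.
move/andP: hk => [hk1 hk2].
have hk1' : (- ((2 * m)%N)%:Z + 1 <= p`_k)%R := hk1.
have hk2' : (p`_k < - ((2 * m)%N)%:Z + 1 + m%:Z)%R := hk2.
have c1 : (m%:Z <= - p`_k)%R by lia.
have c2 : (- p`_k < ((2 * m)%N)%:Z)%R by lia.
apply: (@main_B R p k m r) => //.
- by rewrite pR_coef -intrN -[m%:R]/((m%:Z)%:~R) ler_int.
- by rewrite pR_coef -intrN -[2 * _]natrM -[((2 * m)%N)%:R]/((((2 * m)%N)%:Z)%:~R) ltr_int.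
- move=> j hjk; have := hj j (leq_trans hjk (leqnSn k)).
  rewrite nth_ivsL hjk => /inI_sym_abs hb.
  have : (absz (p`_j)%R * Kn k <= m ^ (k.+1 - j))%N.
    exact: leq_trans (leq_mul hb (leqnn _)) (leq_trunc_div _ _).
  by rewrite pR_coef -intr_norm -natr_absz -natrM -natrX ler_nat.
Qed.


Lemma U_mem (p : {poly int}) (k N : nat) (r : R) : 0 <= r -> r <= N%:R ->
  p \is monic -> size p = k.+1 -> roots_bounded r p -> p \in pbox (ivsU k N).
Proof.
move=> r0 rN hm hs hb; apply: mem_pbox => //; rewrite ?size_ivsU //.
move=> j hj; rewrite nth_ivsU //; apply: inI_sym.
have h1 := @int_coef_bound R p k r r0 hm hs hb j (ltnW hj).
have h2 : (2 ^+ k * r ^+ (k - j) <= 2 ^+ k * N%:R ^+ (k - j) :> R).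
  apply: ler_wpM2l; first by apply: exprn_ge0; lra.
  by apply: lerXn2r; rewrite // nnegrE; lra.
have := le_trans h1 h2.
by rewrite -natrX -natrX -natrM ler_nat.
Qed.

Definition Lred (n N : nat) : seq {poly int} :=
  flatten [seq [seq g * h | g <- pbox (ivsU k N), h <- pbox (ivsU (n - k) N)] | k <- iota 1 n.-1].

Lemma red_mem (p : {poly int}) (n N : nat) (r : R) : 0 <= r -> r <= N%:R ->
  Pn n r p -> reducible_Z p -> p \in Lred n N.
Proof.
move=> r0 rN hP hr.
have [k [g [h [hk hp hgm hhm [sg sh bg bh]]]]] := @red_decomp R p n r hP hr.
apply/flatten_mapP; exists k.
  rewrite mem_iota; move/andP: hk => [hk1 hk2]; apply/andP; split => //; lia.
rewrite hp; apply: allpairs_f.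
  exact: (@U_mem g k N r).
exact: (@U_mem h (n - k) N r).
Qed.

End F.

Lemma size_flatten_map (T S : Type) (A : S -> seq T) (s : seq S) :
  size (flatten [seq A k | k <- s]) = (\sum_(k <- s) size (A k))%N.
Proof.
elim: s => [|x s IH]; first by rewrite big_nil.
by rewrite /= size_cat IH big_cons.
Qed.

Definition CU (n : nat) : nat :=
  (\sum_(k <- iota 1 n.-1) (3 * 2 ^ k) ^ k * (3 * 2 ^ (n - k)) ^ (n - k))%N.

Lemma size_Lred n N : (0 < N)%N -> (size (Lred n N) <= CU n * N ^ (E n).-1)%N.
Proof.
move=> N0; rewrite size_flatten_map /CU big_distrl /= big_seq [in X in (_ <= X)%N]big_seq.
apply: leq_sum => k; rewrite mem_iota => /andP [hk1 hk2].
rewrite size_allpairs.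
apply: (leq_trans (leq_mul (@size_pboxU k N N0) (@size_pboxU (n - k) N N0))).
rewrite mulnACA leq_mul2l; apply/orP; right.
rewrite -expnD leq_pexp2l //.
have := E_add k (n - k); rewrite subnKC; last by lia.
move=> ->.
have : (1 <= k * (n - k))%N by rewrite muln_gt0; apply/andP; split; lia.
lia.
Qed.


Section G.
Variable R : realType.

Lemma card_red (n N : nat) (r : R) : 0 <= r -> r <= N%:R -> (0 < N)%N ->
  (#|` fset_set (Pn n r `&` reducible_Z)| <= CU n * N ^ (E n).-1)%N.
Proof.
move=> r0 rN N0; apply: (leq_trans _ (@size_Lred n N N0)).
apply: card_le_seq => x [hP hR]; exact: (@red_mem R x n N r).
Qed.

Lemma card_Pn (k m N : nat) (r : R) : (3 <= m)%N -> 4 * m%:R <= r -> r <= N%:R ->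
  (m ^ E k.+1 <= Kn k ^ k * #|` fset_set (Pn k.+1 r)|)%N.
Proof.
move=> hm hr rN.
have r0 : 0 <= r by apply: le_trans hr; apply: mulr_ge0.
apply: (leq_trans (size_pboxL k m)); rewrite leq_mul2l; apply/orP; right.
apply: card_ge_seq; last first.
- by move=> x hx; apply: (@pboxL_Pn R k m r x).
- exact: uniq_pbox.
- apply: (sub_finite_set _ (finite_seq (pbox (ivsU k.+1 N)))) => x [hm' [hs [_ hb]]].
  exact: (@U_mem R x k.+1 N r).
Qed.


Definition Cst (k : nat) : nat :=
  (CU k.+1 * Kn k ^ k * 2 ^ (E k.+1).-1 * 8 ^ (E k.+1))%N.

Lemma ratio_bound (k : nat) (r : R) : 16 <= r ->
  (#|` fset_set (Pn k.+1 r `&` reducible_Z)|%:R / #|` fset_set (Pn k.+1 r)|%:R) <= (Cst k)%:R / r.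
Proof.
move=> r16.
set T := E k.+1.
have T1 : T = T.-1.+1 by rewrite /T E_S.
have r0 : 0 < r by lra.
set m := Num.trunc (r / 4).
have /andP [hm1 hm2] := trunc_itv (ltW (divr_gt0 r0 (ltr0n R 4))).
rewrite -/m in hm1 hm2.
set N := (Num.trunc r).+1.
have hN1 : r <= N%:R by apply: ltW; apply: truncnS_gt.
have /andP [hN2 _] := trunc_itv (ltW r0).
have hN3 : N%:R <= r + 1 by rewrite /N -addn1 natrD; lra.
have m4 : (4 < m.+1)%N by rewrite -(ltr_nat R); lra.
have hm3 : (3 <= m)%N by lia.
have hr4 : 4 * m%:R <= r by lra.
have N0 : (0 < N)%N by [].
have ha := @card_red k.+1 N r (ltW r0) hN1 N0.
have hb := @card_Pn k m N r hm3 hr4 hN1.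
set a := #|` _ | in ha *; set b := #|` fset_set (Pn k.+1 r)| in hb *.
have b0 : (0 < b)%N.
  have : (0 < m ^ T)%N by rewrite expn_gt0; lia.
  move=> h; move: (leq_trans h hb); rewrite muln_gt0 => /andP [].
  by [].
have B0 : (0:R) < b%:R by rewrite ltr0n.
have {}ha : (a%:R : R) <= (CU k.+1)%:R * N%:R ^+ T.-1 by rewrite -natrX -natrM ler_nat.
have {}hb : (m%:R ^+ T : R) <= (Kn k)%:R ^+ k * b%:R by rewrite -!natrX -natrM ler_nat.
rewrite ler_pdivrMr // mulrAC ler_pdivlMr //.
set cu := (CU k.+1)%:R in ha *; set kn := (Kn k)%:R in hb *.
rewrite /Cst !natrM !natrX -/cu -/kn -/T.
have cu0 : (0:R) <= cu by rewrite ler0n.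
have kn0 : (0:R) <= kn by rewrite ler0n.
have h1 : N%:R ^+ T.-1 <= (2 * r) ^+ T.-1.
  by apply: lerXn2r; rewrite ?nnegrE ?ler0n //; lra.
have h2 : r ^+ T <= (8 * m%:R) ^+ T.
  by apply: lerXn2r; rewrite ?nnegrE ?ler0n //; lra.
have e1 : (2 * r) ^+ T.-1 * r = 2 ^+ T.-1 * r ^+ T by rewrite exprMn -mulrA -exprSr -T1.
apply: (@le_trans _ _ (cu * (2 ^+ T.-1 * r ^+ T))).
  rewrite -e1 mulrA; apply: ler_wpM2r; first lra.
  apply: (le_trans ha); apply: ler_wpM2l => //.
have P2 : (0:R) <= 2 ^+ T.-1 by apply: exprn_ge0.
have P8 : (0:R) <= 8 ^+ T by apply: exprn_ge0.
have e2 : cu * kn ^+ k * 2 ^+ T.-1 * 8 ^+ T * b%:R = cu * 2 ^+ T.-1 * 8 ^+ T * (kn ^+ k * b%:R) by ring.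
rewrite e2 -!mulrA; apply: ler_wpM2l => //; apply: ler_wpM2l => //.
rewrite exprMn in h2; apply: (le_trans h2); apply: ler_wpM2l => //.
Qed.

End G.

Theorem lemma7 (R : realType) (n : nat) (hn : (1 <= n)%N) :
  (fun r : R =>
     (#|` fset_set (Pn n r `&` reducible_Z)|%:R
      / #|` fset_set (Pn n r)|%:R) : R) @ +oo --> (0 : R).
Proof.
case: n hn => [//|k] _.
apply/cvgr0Pnorm_lt => eps e0.
set C : R := (Cst k)%:R.
have C0 : 0 <= C by rewrite ler0n.
have Ce : 0 <= C / eps by apply: divr_ge0 => //; apply: ltW.
exists (16 + C / eps); split; first by rewrite num_real.
move=> x hx.
have x16 : 16 <= x by lra.
have x0 : 0 < x by lra.
rewrite ger0_norm; last by apply: divr_ge0; rewrite ler0n.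
apply: (le_lt_trans (@ratio_bound R k x x16)).
rewrite ltr_pdivrMr //.
have : C / eps < x by lra.
rewrite ltr_pdivrMr // => h; rewrite mulrC; lra.
Qed.
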